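(* Let $n=p_1p_2\cdots p_l$ be an odd composite integer, where $p_1,\dots,p_l$ are distinct primes. Then $C_R(\mathbb{Z}_n)=\prod_{i=1}^{l} C_R(\mathbb{Z}_{p_i})$.
   Context: For a positive integer $m$, a reduced Weierstrass curve over $\mathbb{Z}_{m}$ is $y^2=x^3+ax+b$ with $(a,b)\in\mathbb{Z}_{m}^2$; it is nonsingular iff $\Delta=-16(4a^3+27b^2)$ is a unit in $\mathbb{Z}_{m}$. Two such curves with coefficients $(a,b)$ and $(\bar a,\bar b)$ are isomorphic iff there is $u\in\mathbb{Z}_{m}^*$ with $\bar a=u^{-4}a$ and $\bar b=u^{-6}b$ (i.e. related by the change of variables $(x,y)\mapsto(u^2x,u^3y)$). $C_R(\mathbb{Z}_m)$ denotes the number of isomorphism classes of nonsingular reduced curves over $\mathbb{Z}_m$. *)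

(* Defs.v *)
From mathcomp Require Import all_boot all_order all_algebra.
Set Implicit Arguments. Unset Strict Implicit. Unset Printing Implicit Defensive.
Import GRing.Theory.
Local Open Scope ring_scope.

(* A reduced Weierstrass curve y^2 = x^3 + a x + b over Z_m is given by its
   coefficient pair (a, b) : 'Z_m * 'Z_m.  ('Z_m is Z/mZ for m >= 2.) *)

Definition nonsingular (m : nat) (c : 'Z_m * 'Z_m) : bool :=
  (- 16 * (4 * c.1 ^+ 3 + 27 * c.2 ^+ 2)) \is a GRing.unit.

Definition curve_iso (m : nat) (c d : 'Z_m * 'Z_m) : bool :=
  [exists u : 'Z_m,
     [&& u \is a GRing.unit, d.1 == u ^- 4 * c.1 & d.2 == u ^- 6 * c.2]].

Definition iso_class (m : nat) (c : 'Z_m * 'Z_m) : {set 'Z_m * 'Z_m} :=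
  [set d | curve_iso c d].

Definition C_R (m : nat) : nat :=
  #|[set iso_class c | c in [set c : 'Z_m * 'Z_m | nonsingular c]]|.

(* Main.v *)
Require Import Defs.
From mathcomp Require Import all_boot all_order all_algebra.
Set Implicit Arguments. Unset Strict Implicit. Unset Printing Implicit Defensive.
Import GRing.Theory.
Local Open Scope ring_scope.

Definition g (m n : nat) (x : 'Z_n) : 'Z_m := (nat_of_ord x)%:R.

Section G.
Variables (m n : nat) (m1 : (1 < m)%N) (n1 : (1 < n)%N) (mn : (m %| n)%N).

Lemma natr_mod a : (((a %% n)%N)%:R : 'Z_m) = a%:R.
Proof. by rewrite -(Zp_nat_mod m1) (modn_dvdm _ mn) Zp_nat_mod. Qed.

Lemma g_nat a : g m (a%:R : 'Z_n) = a%:R.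
Proof. by rewrite /g val_Zp_nat // natr_mod. Qed.

Lemma gD (x y : 'Z_n) : g m (x + y : 'Z_n) = g m x + g m y.
Proof. by rewrite -[x]natr_Zp -[y]natr_Zp -natrD !g_nat natrD. Qed.

Lemma gM (x y : 'Z_n) : g m (x * y : 'Z_n) = g m x * g m y.
Proof. by rewrite -[x]natr_Zp -[y]natr_Zp -natrM !g_nat natrM. Qed.

Lemma g1 : g m (1 : 'Z_n) = 1.
Proof. by have := g_nat 1. Qed.

Lemma g0 : g m (0 : 'Z_n) = 0.
Proof. by have := g_nat 0. Qed.

Lemma gN (x : 'Z_n) : g m (- x : 'Z_n) = - g m x.
Proof. by apply/eqP; rewrite -subr_eq0 opprK -gD addNr g0. Qed.

Lemma gX (x : 'Z_n) e : g m (x ^+ e : 'Z_n) = g m x ^+ e.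
Proof. by elim: e => [|e IH]; rewrite ?expr0 ?g1 // !exprS gM IH. Qed.

Lemma g_unit (x : 'Z_n) : x \is a GRing.unit -> g m (x : 'Z_n) \is a GRing.unit.
Proof.
move=> ux; apply/unitrP; exists (g m x^-1).
by rewrite -!gM mulVr ?mulrV // g1.
Qed.

Lemma gV (x : 'Z_n) : x \is a GRing.unit -> g m (x^-1 : 'Z_n) = (g m x)^-1.
Proof.
move=> ux; apply: (mulrI (g_unit ux)).
by rewrite -gM mulrV ?mulrV ?g_unit // g1.
Qed.

Lemma g_unitE (x : 'Z_n) : (g m (x : 'Z_n) \is a GRing.unit) = coprime m x.
Proof. by rewrite /g unitZpE. Qed.

Lemma g_eq (x y : 'Z_n) : (g m (x : 'Z_n) == g m y) = (x == y %[mod m])%N.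
Proof.
apply/eqP/eqP => [/(congr1 (@nat_of_ord _))|h]; rewrite /g.
  by rewrite !val_Zp_nat //=.
by rewrite -(Zp_nat_mod m1) h Zp_nat_mod.
Qed.

End G.

Section CRT.
Variables (m k : nat) (m1 : (1 < m)%N) (k1 : (1 < k)%N) (cop : coprime m k).
Let n1 : (1 < m * k)%N.
Proof. by rewrite (@leq_trans m) // leq_pmulr // ltnW. Qed.
Let dm : (m %| m * k)%N. Proof. exact: dvdn_mulr. Qed.
Let dk : (k %| m * k)%N. Proof. exact: dvdn_mull. Qed.

Lemma inj2 (x y : 'Z_(m * k)) : g m x = g m y -> g k x = g k y -> x = y.
Proof.
move=> /eqP; rewrite g_eq // => h1 /eqP; rewrite g_eq // => h2.
have : (x == y %[mod m * k])%N by rewrite chinese_remainder // h1 h2.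
have hc : ((Zp_trunc (m * k)).+2 <= m * k)%N by rewrite Zp_cast.
have hx := leq_trans (ltn_ord x) hc; have hy := leq_trans (ltn_ord y) hc.
by rewrite !modn_small // => /eqP /val_inj.
Qed.

Lemma surj2 (a : 'Z_m) (b : 'Z_k) : exists x : 'Z_(m * k), g m x = a /\ g k x = b.
Proof.
pose h (x : 'Z_(m * k)) := (g m x, g k x).
have hi : injective h by move=> x y [] /inj2; apply.
have : bijective h.
  apply: (inj_card_bij hi); rewrite card_prod !card_ord !Zp_cast //.
case=> hinv _ hK; exists (hinv (a, b)).
by have := hK (a, b); rewrite /h => -[-> ->].
Qed.

Lemma unit2 (x : 'Z_(m * k)) :
  (x \is a GRing.unit) = (g m x \is a GRing.unit) && (g k x \is a GRing.unit).
Proof. by rewrite !g_unitE // -[x]natr_Zp unitZpE // natr_Zp coprimeMl. Qed.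

Definition pr (p : nat) (c : 'Z_(m * k) * 'Z_(m * k)) : 'Z_p * 'Z_p :=
  (g p c.1, g p c.2).

Lemma gdisc p (c : 'Z_(m * k) * 'Z_(m * k)) : (1 < p)%N -> (p %| m * k)%N ->
  g p (- 16 * (4 * c.1 ^+ 3 + 27 * c.2 ^+ 2)) =
  - 16 * (4 * (pr p c).1 ^+ 3 + 27 * (pr p c).2 ^+ 2).
Proof. move=> p1 dp. by rewrite gM // gN // g_nat // gD // !gM // !g_nat // !gX. Qed.

Lemma nonsing2 c : nonsingular c = nonsingular (pr m c) && nonsingular (pr k c).
Proof. by rewrite /nonsingular unit2 !gdisc. Qed.


Lemma giso p (u x : 'Z_(m * k)) : (1 < p)%N -> (p %| m * k)%N ->
  u \is a GRing.unit -> g p (u ^- 4 * x) = (g p u) ^- 4 * g p x.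
Proof. by move=> p1 dp uu; rewrite gM // gV ?unitrX // gX. Qed.

Lemma giso6 p (u x : 'Z_(m * k)) : (1 < p)%N -> (p %| m * k)%N ->
  u \is a GRing.unit -> g p (u ^- 6 * x) = (g p u) ^- 6 * g p x.
Proof. by move=> p1 dp uu; rewrite gM // gV ?unitrX // gX. Qed.

Lemma iso2 c d : curve_iso c d =
  curve_iso (pr m c) (pr m d) && curve_iso (pr k c) (pr k d).
Proof.
apply/idP/andP.
  case/existsP => u /and3P [uu /eqP e1 /eqP e2].
  split; apply/existsP; [exists (g m u) | exists (g k u)];
    by rewrite g_unit //= e1 e2 giso ?giso6 // !eqxx.
case=> /existsP [u1 /and3P [u1u /eqP e1 /eqP e2]].
case/existsP => [u2 /and3P [u2u /eqP f1 /eqP f2]].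
have [u [hu1 hu2]] := surj2 u1 u2.
have uu : u \is a GRing.unit by rewrite unit2 hu1 hu2 u1u u2u.
apply/existsP; exists u; rewrite uu /=.
move: e1 e2 f1 f2; rewrite /= => e1 e2 f1 f2.
by apply/andP; split; apply/eqP; apply: inj2;
  rewrite ?giso ?giso6 // ?hu1 ?hu2 ?e1 ?e2 ?f1 ?f2.
Qed.

Lemma surjP (c1 : 'Z_m * 'Z_m) (c2 : 'Z_k * 'Z_k) :
  exists c, pr m c = c1 /\ pr k c = c2.
Proof.
have [x [hx1 hx2]] := surj2 c1.1 c2.1.
have [y [hy1 hy2]] := surj2 c1.2 c2.2.
exists (x, y); rewrite /pr /= hx1 hx2 hy1 hy2.
by case: c1 {hx1 hy1} => ? ?; case: c2 {hx2 hy2}.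
Qed.

Definition F (AB : {set 'Z_m * 'Z_m} * {set 'Z_k * 'Z_k}) :
  {set 'Z_(m * k) * 'Z_(m * k)} :=
  [set d | (pr m d \in AB.1) && (pr k d \in AB.2)].

Lemma classF c : iso_class c = F (iso_class (pr m c), iso_class (pr k c)).
Proof. by apply/setP => d; rewrite !inE iso2. Qed.

Lemma self_iso p (c : 'Z_p * 'Z_p) : c \in iso_class c.
Proof.
rewrite inE; apply/existsP; exists 1; rewrite unitr1 expr1n invr1 !mul1r.
by rewrite !expr1n !invr1 !mul1r !eqxx.
Qed.

Lemma imF :
  [set iso_class c | c in [set c : 'Z_(m * k) * 'Z_(m * k) | nonsingular c]] =
  F @: setX [set iso_class c | c in [set c : 'Z_m * 'Z_m | nonsingular c]]
            [set iso_class c | c in [set c : 'Z_k * 'Z_k | nonsingular c]].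
Proof.
apply/setP => A; apply/imsetP/imsetP.
  case=> c; rewrite inE nonsing2 => /andP [h1 h2] ->.
  exists (iso_class (pr m c), iso_class (pr k c)); last exact: classF.
  rewrite inE /=; apply/andP; split; apply/imsetP; eexists; rewrite ?inE; try eassumption; try reflexivity.
case=> -[B1 B2]; rewrite inE /= => /andP [/imsetP [c1 h1 ->] /imsetP [c2 h2 ->]] ->.
have [c [e1 e2]] := surjP c1 c2.
exists c; last by rewrite classF e1 e2.
by move: h1 h2; rewrite !inE nonsing2 e1 e2 => -> ->.
Qed.

Lemma subF1 (A1 B1 : {set 'Z_m * 'Z_m}) (A2 B2 : {set 'Z_k * 'Z_k}) y : y \in A2 -> F (A1, A2) \subset F (B1, B2) ->
  A1 \subset B1.
Proof.
move=> yA sF; apply/subsetP => x xA.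
have [d [e1 e2]] := surjP x y.
have : d \in F (A1, A2) by rewrite inE /= e1 e2 xA yA.
by move/(subsetP sF); rewrite inE /= e1 => /andP [].
Qed.

Lemma subF2 (A1 B1 : {set 'Z_m * 'Z_m}) (A2 B2 : {set 'Z_k * 'Z_k}) x : x \in A1 -> F (A1, A2) \subset F (B1, B2) ->
  A2 \subset B2.
Proof.
move=> xA sF; apply/subsetP => y yA.
have [d [e1 e2]] := surjP x y.
have : d \in F (A1, A2) by rewrite inE /= e1 e2 xA yA.
by move/(subsetP sF); rewrite inE /= e2 => /andP [].
Qed.

Lemma CR_mul : C_R (m * k) = (C_R m * C_R k)%N.
Proof.
rewrite /C_R imF; set X := setX _ _.
suff inj : {in X &, injective F} by rewrite (card_in_imset inj) cardsX.
move=> [A1 A2] [B1 B2]; rewrite !inE /=.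
case/andP => [/imsetP [a1 _ ->] /imsetP [a2 _ ->]].
case/andP => [/imsetP [b1 _ ->] /imsetP [b2 _ ->]] hF.
have s1 : F (iso_class a1, iso_class a2) \subset F (iso_class b1, iso_class b2)
  by rewrite hF.
have s2 : F (iso_class b1, iso_class b2) \subset F (iso_class a1, iso_class a2)
  by rewrite hF.
congr pair; apply/eqP; rewrite eqEsubset.
  by rewrite (subF1 (self_iso a2) s1) (subF1 (self_iso b2) s2).
by rewrite (subF2 (self_iso a1) s1) (subF2 (self_iso b1) s2).
Qed.

End CRT.

Local Close Scope ring_scope.

Lemma prod_gt0 (ps : seq nat) : all prime ps -> (0 < \prod_(p <- ps) p)%N.
Proof.
elim: ps => [|q ps IH]; rewrite ?big_nil // big_cons /= => /andP [pq aps].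
by rewrite muln_gt0 prime_gt0 // IH.
Qed.

Lemma prod_cop (p : nat) (ps : seq nat) : prime p -> all prime ps ->
  p \notin ps -> coprime p (\prod_(q <- ps) q).
Proof.
move=> pp; elim: ps => [|q ps IH]; rewrite ?big_nil ?coprimen1 // big_cons /=.
move=> /andP [pq aps]; rewrite inE negb_or => /andP [npq nps].
by rewrite coprimeMr IH // andbT prime_coprime // dvdn_prime2.
Qed.

Lemma main_CR (ps : seq nat) : uniq ps -> all prime ps -> ps != [::] ->
  C_R (\prod_(p <- ps) p) = \prod_(p <- ps) C_R p.
Proof.
elim: ps => [|p ps IH] //= /andP [pnin u] /andP [pp ap] _.
rewrite !big_cons.
have [->|ne] := eqVneq ps [::]; first by rewrite !big_nil !muln1.
have h1 : 1 < \prod_(q <- ps) q.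
  case: ps ne {IH pnin u} ap => [|q ps] // _ /= /andP [pq aps].
  rewrite big_cons; apply: (leq_trans (prime_gt1 pq)).
  by rewrite leq_pmulr // prod_gt0.
by rewrite (CR_mul (prime_gt1 pp) h1 (prod_cop pp ap pnin)) IH.
Qed.

Theorem theorem10 (n : nat) (ps : seq nat) :
  uniq ps -> all prime ps -> n = \prod_(p <- ps) p ->
  odd n -> 1 < n -> ~~ prime n ->
  C_R n = \prod_(p <- ps) C_R p.
Proof.
move=> u ap -> _ n1 _; apply: main_CR => //.
by apply/eqP => e; move: n1; rewrite e big_nil.
Qed.
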